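(* Let $\Gamma\leq\mathrm{PSL}_2(\mathbb{R})$ be an infinitely generated Fuchsian group containing no elliptic elements. Then $\Gamma$ has no finite geodesic cover (corresponding to any locally finite fundamental domain).
   Context: $\Gamma$ acts on the upper half plane $\mathbb{H}^2$ by Möbius transformations; $d_{\mathbb{H}^2}$ is the hyperbolic metric. A fundamental domain of $\Gamma$ is a closed set $F\subset\mathbb{H}^2$ whose $\Gamma$-translates cover $\mathbb{H}^2$ and whose interior contains no two distinct points of the same $\Gamma$-orbit; it is locally finite if every compact subset of $\mathbb{H}^2$ meets only finitely many translates $\gamma\cdot F$. A subset $\Gamma_0\subset\Gamma$ containing the identity is a geodesic cover of $\Gamma$ corresponding to $F$ if for all $p,q\in F$, $\min_{\gamma\in\Gamma}d_{\mathbb{H}^2}(p,\gamma\cdot q)=\min_{\gamma\in\Gamma_0}d_{\mathbb{H}^2}(p,\gamma\cdot q)$. *)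

(* Defs.v *)
From HB Require Import structures.
From mathcomp Require Import all_boot all_order all_algebra.
From mathcomp Require Import all_classical all_reals all_analysis.
Set Implicit Arguments. Unset Strict Implicit. Unset Printing Implicit Defensive.
Import Order.TTheory GRing.Theory Num.Theory.
Import numFieldNormedType.Exports.
Local Open Scope classical_set_scope.
Local Open Scope ring_scope.

Section Defs.
Variable R : realType.

Definition mA (g : 'M[R]_2) : R := g ord0 ord0.
Definition mB (g : 'M[R]_2) : R := g ord0 ord_max.
Definition mC (g : 'M[R]_2) : R := g ord_max ord0.
Definition mD (g : 'M[R]_2) : R := g ord_max ord_max.

(* Points of the plane R^2 = C, z = (x, y) = x + i y; upper half plane. *)
Definition H2 : set (R * R) := [set z | 0 < z.2].

(* Moebius action z |-> (a z + b) / (c z + d) written in real coordinates. *)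
Definition mobius (g : 'M[R]_2) (z : R * R) : R * R :=
  let: (x, y) := z in
  let den := (mC g * x + mD g) ^+ 2 + (mC g * y) ^+ 2 in
  (((mA g * x + mB g) * (mC g * x + mD g) + mA g * mC g * y ^+ 2) / den,
   (mA g * mD g - mB g * mC g) * y / den).

Definition arcosh (t : R) : R := ln (t + Num.sqrt (t ^+ 2 - 1)).

Definition dH (z w : R * R) : R :=
  arcosh (1 + ((z.1 - w.1) ^+ 2 + (z.2 - w.2) ^+ 2) / (2 * z.2 * w.2)).

(* PSL_2(R) = SL_2(R)/{+-1}.  A subgroup of PSL_2(R) is represented by its
   full preimage in SL_2(R): a subgroup of SL_2(R) containing -1. *)
Definition is_PSL2_subgroup (G : set 'M[R]_2) : Prop :=
  [/\ (forall g, G g -> \det g = 1),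
      G 1%:M,
      (forall g h, G g -> G h -> G (g *m h)),
      (forall g, G g -> G (invmx g)) &
      (forall g, G g -> G (- g))].

(* Discreteness in PSL_2(R) (quotient topology of the matrix topology):
   every element is isolated, i.e. near a representative g the only elements
   of the group are the representatives +-g of the same class. *)
Definition discrete_PSL2 (G : set 'M[R]_2) : Prop :=
  forall g, G g -> \forall h \near g, G h -> h = g \/ h = - g.

Definition Fuchsian (G : set 'M[R]_2) : Prop :=
  is_PSL2_subgroup G /\ discrete_PSL2 G.

(* Elements of PSL_2(R) generated by a list of matrices
   (modulo the identification g ~ -g). *)
Inductive generated (L : seq 'M[R]_2) : 'M[R]_2 -> Prop :=
| gen_one : generated L 1%:M
| gen_opp g : generated L g -> generated L (- g)
| gen_mul h g : h \in L -> generated L g -> generated L (h *m g)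
| gen_mulV h g : h \in L -> generated L g -> generated L (invmx h *m g).

Definition finitely_generated (G : set 'M[R]_2) : Prop :=
  exists L : seq 'M[R]_2, (forall h, h \in L -> G h) /\
    (forall g, G g -> generated L g).

Definition elliptic (g : 'M[R]_2) : Prop :=
  g <> 1%:M /\ g <> - 1%:M /\ `|\tr g| < 2.

Definition translate (g : 'M[R]_2) (F : set (R * R)) : set (R * R) :=
  mobius g @` F.

Definition fundamental_domain (G : set 'M[R]_2) (F : set (R * R)) : Prop :=
  [/\ F `<=` H2,
      closure F `&` H2 `<=` F,
      (forall z, H2 z -> exists g w, G g /\ F w /\ z = mobius g w) &
      (forall z w g, (interior F) z -> (interior F) w -> G g ->
          mobius g z = w -> z = w)].

Definition locally_finite (G : set 'M[R]_2) (F : set (R * R)) : Prop :=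
  forall K : set (R * R), compact K -> K `<=` H2 ->
    exists L : seq 'M[R]_2, forall g, G g -> translate g F `&` K !=set0 ->
      exists2 h, h \in L & (g = h \/ g = - h).

Definition geodesic_cover (G G0 : set 'M[R]_2) (F : set (R * R)) : Prop :=
  [/\ G0 `<=` G, G0 1%:M &
      forall p q, F p -> F q ->
        exists2 g0, G0 g0 & forall g, G g -> dH p (mobius g0 q) <= dH p (mobius g q)].

End Defs.

(* Main.v *)
Require Import Defs.
From HB Require Import structures.
From mathcomp Require Import all_boot all_order all_algebra.
From mathcomp Require Import all_classical all_reals all_analysis.
From mathcomp Require Import ring lra.
Import Order.TTheory GRing.Theory Num.Theory.
Import numFieldNormedType.Exports.
Local Open Scope classical_set_scope.
Local Open Scope ring_scope.
Set Implicit Arguments. Unset Strict Implicit.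

Section Alg.
Variable R : realType.
Implicit Types g h : 'M[R]_2.

Lemma lift00 : lift ord0 (ord0 : 'I_1) = ord_max :> 'I_2.
Proof. by apply/val_inj. Qed.

Lemma mulE g h :
  [/\ mA (g *m h) = mA g * mA h + mB g * mC h,
      mB (g *m h) = mA g * mB h + mB g * mD h,
      mC (g *m h) = mC g * mA h + mD g * mC h &
      mD (g *m h) = mC g * mB h + mD g * mD h].
Proof.
by split; rewrite /mA /mB /mC /mD !mxE !big_ord_recl big_ord0 !addr0 ?lift00.
Qed.

Lemma oppE g :
  [/\ mA (- g) = - mA g, mB (- g) = - mB g, mC (- g) = - mC g & mD (- g) = - mD g].
Proof. by split; rewrite /mA /mB /mC /mD !mxE. Qed.

Lemma oneE :
  [/\ mA (1%:M : 'M[R]_2) = 1, mB (1%:M : 'M[R]_2) = 0, mC (1%:M : 'M[R]_2) = 0 & mD (1%:M : 'M[R]_2) = 1].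
Proof. by split; rewrite /mA /mB /mC /mD !mxE. Qed.

Lemma detE g : \det g = mA g * mD g - mB g * mC g.
Proof.
rewrite (expand_det_row g ord0) !big_ord_recl big_ord0 addr0 /cofactor !det_mx11.
rewrite /mA /mB /mC /mD !mxE /=.
have L1 : forall k : 'I_1, lift ord0 k = ord_max :> 'I_2.
  by move=> [[|//] ?]; apply/val_inj.
have L2 : forall k : 'I_1, lift ord_max k = ord0 :> 'I_2.
  by move=> [[|//] ?]; apply/val_inj.
rewrite !L1 !L2 /bump /= expr0 expr1 mul1r mulN1r; ring.
Qed.

Lemma trE g : \tr g = mA g + mD g.
Proof. by rewrite /mxtrace !big_ord_recl big_ord0 addr0 lift00. Qed.

Lemma matE g h : mA g = mA h -> mB g = mB h -> mC g = mC h -> mD g = mD h -> g = h.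
Proof.
rewrite /mA /mB /mC /mD => e1 e2 e3 e4; apply/matrixP => i j.
have i2 : forall k : 'I_2, k = ord0 \/ k = ord_max.
  by move=> [[|[|//]] ?]; [left|right]; apply/val_inj.
by case: (i2 i) => ->; case: (i2 j) => ->.
Qed.

End Alg.

Section Mob.
Variable R : realType.
Implicit Types g h k : 'M[R]_2.

Definition den g (z : R * R) := (mC g * z.1 + mD g) ^+ 2 + (mC g * z.2) ^+ 2.

Lemma den_pos {g z} : \det g = 1 -> 0 < z.2 -> 0 < den g z.
Proof.
rewrite detE /den => hd hy.
rewrite lt0r addr_ge0 ?sqr_ge0 // andbT paddr_eq0 ?sqr_ge0 //.
apply/negP => /andP[]; rewrite !sqrf_eq0 mulf_eq0 (gt_eqF hy) orbF => h1 /eqP hc.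
move: h1; rewrite hc mul0r add0r => /eqP hdd; move: hd; rewrite hdd hc !mulr0 subr0.
by move=> /eqP; rewrite eq_sym oner_eq0.
Qed.

Lemma mobius_H2 g z : \det g = 1 -> H2 z -> H2 (mobius g z).
Proof.
move=> hd hz; have := den_pos hd hz; move: hz; rewrite /H2 /=.
case: z => x y /= hy; rewrite /den /= => hD.
by rewrite -detE hd mul1r divr_gt0.
Qed.

Lemma mobius_opp g z : mobius (- g) z = mobius g z.
Proof.
case: z => x y; rewrite /mobius; have [-> -> -> ->] := oppE g.
move: (mA g) (mB g) (mC g) (mD g) => a b c d.
by congr (_, _); congr (GRing.mul _ (GRing.inv _)); ring.
Qed.

Lemma mobius_one (z : R * R) : mobius 1%:M z = z.
Proof.
case: z => x y; rewrite /mobius; have [-> -> -> ->] := (@oneE R).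
by congr (_, _); rewrite !mul0r ?mulr0 !add0r ?addr0 ?expr0n /= ?addr0 ?subr0 !mul1r ?mulr1 ?expr1n ?divr1 ?mul0r ?addr0.
Qed.

Lemma mobius_mul g h z : \det g = 1 -> \det h = 1 -> H2 z ->
  mobius (g *m h) z = mobius g (mobius h z).
Proof.
move=> dg dh hz.
have hD1 := den_pos dh hz.
have hD2 := den_pos dg (mobius_H2 dh hz).
have dgh : \det (g *m h) = 1 by rewrite det_mulmx dg dh mulr1.
have hD3 := den_pos dgh hz.
move: hD1 hD2 hD3 dg dh dgh; rewrite /den /mobius !detE; case: z hz => x y hz.
have [-> -> -> ->] := mulE g h.
set a := mA g; set b := mB g; set c := mC g; set d := mD g.
set a' := mA h; set b' := mB h; set c' := mC h; set d' := mD h.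
move=> h1 h2 h3 _ _ _.
rewrite /= in h2 *.
have n1 := lt0r_neq0 h1; have n2 := lt0r_neq0 h2; have n3 := lt0r_neq0 h3.
clearbody a b c d a' b' c' d'.
set N := (a' * x + b') * (c' * x + d') + a' * c' * y ^+ 2 in n2 *.
set M := (a' * d' - b' * c') * y in n2 *.
set D1 := (c' * x + d') ^+ 2 + (c' * y) ^+ 2 in n1 n2 *.
have n2' : (c * N + d * D1) ^+ 2 + (c * M) ^+ 2 != 0.
  have -> : (c * N + d * D1) ^+ 2 + (c * M) ^+ 2 =
     D1 ^+ 2 * ((c * (N / D1) + d) ^+ 2 + (c * (M / D1)) ^+ 2).
    by clearbody N M D1; field.
  by rewrite mulf_neq0 // expf_neq0.
rewrite {}/N {}/M {}/D1 in n1 n2 n2' *.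
by congr (_, _); field; rewrite n1 n2' n3.
Qed.


Lemma fix_real (a b c d x y : R) : a * d - b * c = 1 -> 0 < y ->
  0 < (c * x + d) ^+ 2 + (c * y) ^+ 2 ->
  ((a * x + b) * (c * x + d) + a * c * y ^+ 2) / ((c * x + d) ^+ 2 + (c * y) ^+ 2) = x ->
  (a * d - b * c) * y / ((c * x + d) ^+ 2 + (c * y) ^+ 2) = y ->
  (c = 0 /\ b = 0 /\ a = d /\ (d = 1 \/ d = -1)) \/ `|a + d| < 2.
Proof.
move=> hdet hy hD e1 e2.
set Dp := (c * x + d) ^+ 2 + (c * y) ^+ 2 in hD e1 e2.
have D1 : Dp = 1.
  move/(congr1 (fun t => t * Dp)) : e2; rewrite divfK ?gt_eqF // hdet mul1r => e2.
  by apply: (mulfI (lt0r_neq0 hy)); rewrite -e2 mulr1.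
rewrite D1 divr1 in e1.
have ea : a = 2 * c * x + d.
  apply: (mulIf (lt0r_neq0 hy)); apply/eqP; rewrite -subr_eq0.
  have -> : a * y - (2 * c * x + d) * y = a * y * (1 - Dp) + c * y * 
     (((a * x + b) * (c * x + d) + a * c * y ^+ 2) - x) + (c * x + d) * y * (a * d - b * c - 1).
    by rewrite /Dp; ring.
  by rewrite D1 e1 hdet !subrr !mulr0 !addr0.
have eb : a * x + b = x * (c * x + d) - y * (c * y).
  apply/eqP; rewrite -subr_eq0.
  have -> : a * x + b - (x * (c * x + d) - y * (c * y)) = (a * x + b) * (1 - Dp) + (c * x + d) * 
     (((a * x + b) * (c * x + d) + a * c * y ^+ 2) - x) - c * y * y * (a * d - b * c - 1).
    by rewrite /Dp; ring.
  by rewrite D1 e1 hdet !subrr !mulr0 subr0 addr0.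
have [c0|cn0] := eqVneq c 0.
  left; have d2 : d ^+ 2 = 1 by rewrite -D1 /Dp c0; ring.
  have eb' : b = x * (c * x + d) - y * (c * y) - a * x by rewrite -eb; ring.
  split=> //; split; first by rewrite eb' ea c0; ring.
  split; first by rewrite ea c0; ring.
  have /orP[/eqP->|/eqP->] : (d == 1) || (d == -1) by rewrite -sqrf_eq1 d2.
    by left.
  by right.
right; rewrite ltr_norml.
have hc2 : 0 < (c * y) ^+ 2 by rewrite exprn_even_gt0 // mulf_neq0 // lt0r_neq0.
have hs : a + d = 2 * (c * x + d) by rewrite ea; ring.
rewrite hs; move: D1; rewrite /Dp => D1.
apply/andP; split; nra.
Qed.

Lemma fix_ell k w : \det k = 1 -> H2 w -> mobius k w = w ->
  k = 1%:M \/ k = - 1%:M \/ `|\tr k| < 2.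
Proof.
move=> dk hw; have hD := den_pos dk hw; move: hw hD dk.
rewrite /H2 /den /mobius trE detE; case: w => x y /= hy hD dk [e1 e2].
have [[c0 [b0 [ad [d1|d1]]]]|h] := fix_real dk hy hD e1 e2; last by right; right.
  left; have [q1 q2 q3 q4] := (@oneE R); apply: matE; rewrite ?q1 ?q2 ?q3 ?q4 //.
  by rewrite ad.
right; left; have [q1 q2 q3 q4] := (@oneE R); have [p1 p2 p3 p4] := oppE (1%:M : 'M[R]_2).
apply: matE; rewrite ?p1 ?p2 ?p3 ?p4 ?q1 ?q2 ?q3 ?q4 ?oppr0 //; by rewrite ?ad.
Qed.

End Mob.

Section Dist.
Variable R : realType.

Lemma dH_refl (p : R * R) : dH p p = 0.
Proof.
by rewrite /dH /arcosh !subrr expr0n /= addr0 mul0r addr0 expr1n subrr sqrtr0 addr0 ln1.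
Qed.

Lemma dH_le0 (p u : R * R) : H2 p -> H2 u -> dH p u <= 0 -> p = u.
Proof.
rewrite /H2 /dH /arcosh => hp hu.
set n := (p.1 - u.1) ^+ 2 + (p.2 - u.2) ^+ 2.
have n0 : 0 <= n by rewrite addr_ge0 ?sqr_ge0.
have dpos : 0 < 2 * p.2 * u.2 by rewrite !mulr_gt0.
have [nz|nn] := eqVneq n 0.
  move: nz; rewrite /n => /eqP; rewrite paddr_eq0 ?sqr_ge0 // !sqrf_eq0 !subr_eq0.
  by case: p {hp dpos n n0} => ? ?; case: u {hu} => ? ? /andP[/eqP /= -> /eqP /= ->].
have sp : 0 < n / (2 * p.2 * u.2) by rewrite divr_gt0 // lt0r nn.
set t := 1 + _.
have t1 : 1 < t by rewrite /t ltrDl.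
have : 0 < ln (t + Num.sqrt (t ^+ 2 - 1)).
  apply: ln_gt0; apply: (lt_le_trans t1); rewrite lerDl sqrtr_ge0 //.
by move=> h /(lt_le_trans h); rewrite ltxx.
Qed.

End Dist.

Section T.
Variable R : realType.
Implicit Types z : R * R.

Lemma c_fst z : {for z, continuous (fun p : R * R => p.1)}.
Proof. exact: cvg_fst. Qed.
Lemma c_snd z : {for z, continuous (fun p : R * R => p.2)}.
Proof. exact: cvg_snd. Qed.

Lemma c_pair (f g : R * R -> R) z : {for z, continuous f} -> {for z, continuous g} ->
  {for z, continuous (fun p => (f p, g p))}.
Proof. move=> hf hg; exact: (cvg_pair hf hg). Qed.

Lemma c_pair1 (f g : R -> R) (t : R) : {for t, continuous f} -> {for t, continuous g} ->
  {for t, continuous (fun p => (f p, g p))}.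
Proof. move=> hf hg; exact: (cvg_pair hf hg). Qed.

End T.

Section Top.
Variable R : realType.
Implicit Types g h : 'M[R]_2.

Ltac cont := repeat first [ apply: continuousM | apply: continuousD | apply: c_fst | apply: c_snd | apply: cvg_cst ].

Lemma mobius_cont g (z : R * R) : \det g = 1 -> H2 z -> {for z, continuous (mobius g)}.
Proof.
move=> dg hz; have hD := den_pos dg hz; move: hD; rewrite /den => hD.
set a := mA g; set b := mB g; set c := mC g; set d := mD g.
have -> : mobius g = fun p : R * R =>
  (((a * p.1 + b) * (c * p.1 + d) + a * c * (p.2 * p.2)) *
     ((c * p.1 + d) * (c * p.1 + d) + (c * p.2) * (c * p.2))^-1,
   ((a * d - b * c) * p.2) * ((c * p.1 + d) * (c * p.1 + d) + (c * p.2) * (c * p.2))^-1).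
  by apply: funext => -[x y]; rewrite /mobius !expr2.
apply: c_pair; apply: continuousM; cont; apply: continuousV; cont;
  by rewrite -!expr2 lt0r_neq0.
Qed.

Lemma inv_props g : \det g = 1 ->
  [/\ \det (invmx g) = 1, invmx g *m g = 1%:M & g *m invmx g = 1%:M].
Proof.
move=> dg; have ug : g \in unitmx by rewrite unitmxE dg unitr1.
by split; [rewrite det_inv dg invr1 | rewrite mulVmx | rewrite mulmxV].
Qed.

Lemma mobius_invK g z : \det g = 1 -> H2 z -> mobius (invmx g) (mobius g z) = z.
Proof.
move=> dg hz; have [di e1 e2] := inv_props dg.
by rewrite -mobius_mul // e1 mobius_one.
Qed.

Lemma mobius_Kinv g z : \det g = 1 -> H2 z -> mobius g (mobius (invmx g) z) = z.
Proof.
move=> dg hz; have [di e1 e2] := inv_props dg.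
by rewrite -mobius_mul // e2 mobius_one.
Qed.

Lemma translate_closed g (F : set (R * R)) : \det g = 1 -> F `<=` @H2 R ->
  closure F `&` @H2 R `<=` F -> closure (translate g F) `&` @H2 R `<=` translate g F.
Proof.
move=> dg FH cF z [cz hz].
have [di _ _] := inv_props dg.
set w := mobius (invmx g) z.
have hw : H2 w := mobius_H2 di hz.
have Fw : F w.
  apply: cF; split=> // B hB.
  have hc := mobius_cont di hz.
  have : nbhs z (mobius (invmx g) @^-1` B) by apply: hc.
  move=> /cz [v [[f Ff <-] /= hv]].
  by exists f; split=> //; rewrite mobius_invK // in hv; apply: FH.
by exists w => //; rewrite /w mobius_Kinv.
Qed.

End Top.

Section U.
Variable R : realType.
Implicit Types g h : 'M[R]_2.

Lemma translate_opp h (F : set (R * R)) : translate (- h) F = translate h F.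
Proof. by rewrite /translate; apply: eq_imagel => x _; rewrite mobius_opp. Qed.

Lemma union_closed (G S : set 'M[R]_2) (F : set (R * R)) :
  (forall g, G g -> \det g = 1) -> F `<=` @H2 R -> closure F `&` @H2 R `<=` F ->
  locally_finite G F -> S `<=` G ->
  closure (\bigcup_(g in S) translate g F) `&` @H2 R `<=` \bigcup_(g in S) translate g F.
Proof.
move=> dG FH cF LF SG z [cz hz].
have [//|nz] := pselect ((\bigcup_(g in S) translate g F) z); exfalso.
have hz' : 0 < z.2 := hz.
set r := z.2 / 2.
have hr : 0 < r by rewrite divr_gt0.
set K := `[z.1 - r, z.1 + r] `*` `[z.2 - r, z.2 + r].
have cK : compact K by apply: compact_setX; apply: segment_compact.
have KH : K `<=` @H2 R.
  move=> p [_ /=]; rewrite in_itv /= => /andP[h1 _]; rewrite /H2.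
  by apply: (lt_le_trans _ h1); rewrite /r; lra.
have [L hL] := LF K cK KH.
have key : forall s : seq 'M[R]_2, \forall w \near z, forall h, h \in s ->
    (exists g, S g /\ (g = h \/ g = - h)) -> ~ translate h F w.
  elim=> [|h s IH]; first by apply: filterE => w h; rewrite in_nil.
  have [[g [Sg hg]]|nP] := pselect (exists g, S g /\ (g = h \/ g = - h)); last first.
    apply: filterS IH => w IH h'; rewrite in_cons => /orP[/eqP->|hs] //.
    exact: IH.
  have eT : translate h F = translate g F.
    by case: hg => ->; rewrite ?translate_opp.
  have ncl : ~ closure (translate g F) z.
    move=> cl; apply: nz; exists g => //.
    exact: (translate_closed (dG _ (SG _ Sg)) FH cF).
  have [[B [hB dB]]|nB] := pselect (exists B, nbhs z B /\ translate g F `&` B = set0); last first.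
    exfalso; apply: ncl => B hB.
    have [//|hA] := pselect (translate g F `&` B !=set0).
    exfalso; apply: nB; exists B; split=> //; apply/seteqP; split=> // x Ax.
    by apply: hA; exists x.
  apply: filterS (filterI hB IH) => w [Bw IHw] h'; rewrite in_cons => /orP[/eqP->|hs] //.
    by move=> _; rewrite eT => Tw; have : (translate g F `&` B) w by []; rewrite dB.
  exact: IHw.
have nK : nbhs z K.
  exists (`]z.1 - r, z.1 + r[%classic, `]z.2 - r, z.2 + r[%classic); last first.
    move=> p [/= h1 h2]; split; move: h1 h2; rewrite /= !in_itv /= => /andP[a1 a2] /andP[b1 b2].
      by rewrite !ltW.
    by rewrite !ltW.
  split; apply: near_in_itvoo; rewrite in_itv /=; apply/andP; split; lra.
have [v [[g Sg Tv] [Kv kv]]] := cz _ (filterI nK (key L)).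
have [h hLh hg] := hL g (SG _ Sg) (ex_intro _ v (conj Tv Kv)).
apply: (kv h hLh); first by exists g.
by case: hg => e; move: Tv; rewrite e ?translate_opp.
Qed.


Lemma H2_connected : connected (@H2 R).
Proof.
pose f (z : R * R) (t : R) : R * R := (t * z.1, 1 - t + t * z.2).
have -> : @H2 R = \bigcup_(z in @H2 R) (f z @` `[0, 1]%classic).
  apply/seteqP; split.
    move=> z hz; exists z => //; exists 1.
      by rewrite /= in_itv /= lexx ler01.
    by rewrite /f mul1r subrr add0r mul1r; case: z {hz}.
  move=> p [z hz [t]]; rewrite /= in_itv /= => /andP[t0 t1] <-.
  rewrite /H2 /f /=; move: hz; rewrite /H2 => hz.
  have A : 0 <= t * z.2 by apply: mulr_ge0 => //; apply: ltW.
  have [->|n1] := eqVneq t 1; first by rewrite subrr add0r mul1r.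
  have : t < 1 by rewrite lt_neqAle n1 t1.
  lra.
apply: bigcup_connected.
  exists (0, 1) => z hz; exists 0; first by rewrite /= in_itv /= lexx ler01.
  by rewrite /f !mul0r subr0 addr0.
move=> z hz; apply: connected_continuous_connected.
  by apply/connected_intervalP; apply: interval_is_interval.
apply: continuous_subspaceT => t; rewrite /f.
have h1 : {for t, continuous (fun t : R => t * z.1)}.
  by apply: continuousM; [exact: cvg_id | exact: cvg_cst].
have h2 : {for t, continuous (fun t : R => 1 - t + t * z.2)}.
  apply: continuousD; last by apply: continuousM; [exact: cvg_id | exact: cvg_cst].
  apply: continuousD; first exact: cvg_cst.
  exact: (continuousN cvg_id).
exact: (cvg_pair h1 h2).
Qed.

End U.

Section Gen.
Variable R : realType.
Implicit Types g h : 'M[R]_2.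

Lemma gen_mulmx (L : seq 'M[R]_2) a b :
  generated L a -> generated L b -> generated L (a *m b).
Proof.
move=> ga gb; elim: ga => [|g _ IH|h g hL _ IH|h g hL _ IH].
- by rewrite mul1mx.
- by rewrite mulNmx; apply: gen_opp.
- by rewrite -mulmxA; apply: gen_mul.
- by rewrite -mulmxA; apply: gen_mulV.
Qed.

Lemma gen_in (L : seq 'M[R]_2) h : h \in L -> generated L h.
Proof. by move=> hL; rewrite -(mulmx1 h); apply: gen_mul => //; apply: gen_one. Qed.

Lemma key (G : set 'M[R]_2) (F : set (R * R)) (L : seq 'M[R]_2) :
  is_PSL2_subgroup G -> (forall g, G g -> ~ elliptic g) -> F `<=` @H2 R ->
  geodesic_cover G [set` L] F ->
  forall h g w1 w2, G h -> G g -> F w1 -> F w2 -> mobius h w1 = mobius g w2 ->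
  exists2 g0, g0 \in L & (g = h *m g0 \/ g = - (h *m g0)).
Proof.
move=> [Gdet G1 GM GI GN] nell FH [G0G G01 gc] h g w1 w2 Gh Gg Fw1 Fw2 e.
have H1 := FH _ Fw1; have H2' := FH _ Fw2.
set k := invmx h *m g.
have Gk : G k by apply: GM => //; apply: GI.
have dk := Gdet _ Gk; have dh := Gdet _ Gh; have dg := Gdet _ Gg.
have [dih _ _] := inv_props dh.
have ek : mobius k w2 = w1.
  by rewrite /k mobius_mul // -e mobius_invK.
have [g0 Lg0 hg0] := gc _ _ Fw1 Fw2.
have Gg0 : G g0 by apply: G0G.
have dg0 := Gdet _ Gg0.
have e0 : w1 = mobius g0 w2.
  apply: dH_le0 => //; first exact: mobius_H2.
  by have := hg0 _ Gk; rewrite ek dH_refl.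
set m := invmx k *m g0.
have Gm : G m by apply: GM => //; apply: GI.
have [dik _ _] := inv_props dk.
have em : mobius m w2 = w2.
  by rewrite /m mobius_mul // -e0 -ek mobius_invK.
have hm : m = 1%:M \/ m = - 1%:M.
  have [//|[//|tr2]] := fix_ell (Gdet _ Gm) H2' em; first by left.
    by right.
  have [->|n1] := pselect (m = 1%:M); first by left.
  have [->|n2] := pselect (m = - 1%:M); first by right.
  by exfalso; apply: (nell _ Gm).
have uk : k \in unitmx by rewrite unitmxE dk unitr1.
have uh : h \in unitmx by rewrite unitmxE dh unitr1.
have eg0 : g0 = k *m m by rewrite /m mulKVmx.
have eg : g = h *m k by rewrite /k mulKVmx.
exists g0 => //.
case: hm => hm; rewrite hm in eg0.
  by left; rewrite eg eg0 mulmx1.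
right; rewrite eg eg0 mulmxN mulmx1 mulmxN opprK //.
Qed.

End Gen.

Unset Implicit Arguments.
Theorem corollary2p6 (R : realType) (G : set 'M[R]_2) :
  Fuchsian G -> ~ finitely_generated G ->
  (forall g, G g -> ~ elliptic g) ->
  forall F : set (R * R), fundamental_domain G F -> locally_finite G F ->
  ~ (exists G0 : set 'M[R]_2, finite_set G0 /\ geodesic_cover G G0 F).
Proof.
move=> [PG _] nfg nell F [FH cF cover _] LF [G0 [fin gcov]].
have [L eL] := (finite_seqP G0).1 fin.
rewrite eL in gcov.
have K := @key R G F L PG nell FH gcov.
have [Gdet G1 GM GI GN] := PG.
have [G0G _ _] := gcov.
apply: nfg; exists L; split; first by move=> h hL; apply: G0G.
have key2 : forall h g, G h -> generated L h -> G g ->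
    translate h F `&` translate g F !=set0 -> generated L g.
  move=> h g Gh gh Gg [x [[w1 Fw1 e1] [w2 Fw2 e2]]].
  have [g0 Lg0 [->|->]] := K h g w1 w2 Gh Gg Fw1 Fw2 (etrans e1 (esym e2)).
    by apply: gen_mulmx => //; apply: gen_in.
  by apply: gen_opp; apply: gen_mulmx => //; apply: gen_in.
have [w0 Fw0] : exists w, F w.
  have [g [w [_ [Fw _]]]] := cover (0, 1) ltr01.
  by exists w.
pose Hs := [set h | G h /\ generated L h].
pose Bs := [set h | G h /\ ~ generated L h].
pose A := \bigcup_(h in Hs) translate h F.
pose B := \bigcup_(h in Bs) translate h F.
have dG : forall g, G g -> \det g = 1 by [].
have AH : A `<=` @H2 R.
  move=> x [h [Gh _] [w Fw <-]]; exact: mobius_H2 (Gdet _ Gh) (FH _ Fw).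
have AB : forall x, A x -> B x -> False.
  move=> x [h [Gh gh] Tx] [g [Gg ng] Tx'].
  by apply: ng; apply: (key2 h g Gh gh Gg); exists x.
have eA : A = @H2 R.
  apply: H2_connected.
  - exists w0; exists 1%:M; first by split=> //; apply: gen_one.
    by exists w0 => //; rewrite mobius_one.
  - exists (~` closure B); first by apply: closed_openC; apply: closed_closure.
    apply/seteqP; split.
      move=> x Ax; split; first exact: AH.
      move=> cB; apply: (AB x Ax).
      have sub : Bs `<=` G by move=> h [].
      exact: (union_closed dG FH cF LF sub (conj cB (AH x Ax))).
    move=> x [Hx ncB]; have [g [w [Gg [Fw ex]]]] := cover x Hx.
    have [gg|ng] := pselect (generated L g).
      by rewrite ex; exists g => //; exists w.
    by exfalso; apply: ncB; apply: subset_closure; rewrite ex; exists g; [split | exists w].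
  - exists (closure A); first exact: closed_closure.
    apply/seteqP; split.
      by move=> x Ax; split; [apply: AH | apply: subset_closure].
    move=> x [Hx cA].
    have sub : Hs `<=` G by move=> h [].
    exact: (union_closed dG FH cF LF sub (conj cA Hx)).
move=> g Gg.
have : A (mobius g w0) by rewrite eA; apply: mobius_H2 (Gdet _ Gg) (FH _ Fw0).
move=> [h [Gh gh] Tx].
by apply: (key2 h g Gh gh Gg); exists (mobius g w0); split=> //; exists w0.
Qed.
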